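(* Let $G$ be an f-closed and splittable query graph, and let $u,v\in V(G)$. Suppose $P_A$ and $P_B$ are two distinct directed simple paths from $u$ to $v$ such that no vertex of $P_A$ other than $u,v$ lies in the same strongly connected component as a vertex of $P_B$ other than $u,v$. Then $v\in u^{\oplus}$.
   Context: $G=G[Q]$ is the query graph of a Boolean CQ without self-joins with atoms $R(u,v)$, $u\ne v$, first attribute the key: vertices are variables, each atom gives an edge $e_R=(u_R,v_R)$ (parallel edges from different atoms allowed), consistent/inconsistent according to the type of $R$; $E^i$ = inconsistent edges. Paths may have zero edges. $x\to y$: a directed path with only consistent edges; $x\leadsto y$: any directed path; undirected paths ignore directions; for a path $P$ and vertex set $N$, $P\cap N$ is the set of vertices of $P$ in $N$. $u^{\oplus}=\{v:u\to v\}$, $u^+=\{v:u\leadsto v\}$, $u^{+,R}=\{v: u\leadsto v$ in $G-\{e_R\}\}$. For $R,S\in E^i$: $R\sim S$ iff $u_S\in u_R^+$ and $u_R\in u_S^+$; $[R]$ the class of $R$; $coupled^+(R)=[R]\cup\{S\in E^i:\exists$ undirected path $P$ from $v_R$ to $u_S$ with $P\cap u_R^{+,R}=\emptyset\}$; $G$ is splittable if there are no $R,S\in E^i$ with $R\in coupled^+(S)$, $S\in coupled^+(R)$ and $R\not\sim S$. $G$ is f-closed if for every $R\in E^i$, $v_R^{\oplus}\cap u_R^{+,R}\subseteq u_R^{\oplus}$. *)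

(* Defs.v *)
From mathcomp Require Import all_boot.
Set Implicit Arguments. Unset Strict Implicit. Unset Printing Implicit Defensive.

(* Query graph of a self-join-free Boolean CQ with binary atoms R(u,v), u <> v.
   Vertices = variables (V), edges = atoms (A); atom R gives the directed edge
   e_R = (src R, tgt R) = (u_R, v_R); parallel edges are allowed.
   [consistent R] is true iff the relation of R is consistent. *)
Record qgraph := QGraph {
  V : finType;
  A : finType;
  src : A -> V;
  tgt : A -> V;
  consistent : A -> bool;
  no_loop : forall a, src a != tgt a
}.

Section QG.
Variable G : qgraph.
Local Notation V := (V G).
Local Notation A := (A G).
Local Notation src := (@src G).
Local Notation tgt := (@tgt G).

Definition inconsistent (R : A) : bool := ~~ consistent R.

Definition adjE (ok : pred A) : rel V :=
  [rel x y | [exists e, [&& ok e, src e == x & tgt e == y]]].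

Definition reach (ok : pred A) (x y : V) : bool := connect (adjE ok) x y.

Definition dreach (x y : V) : bool := reach predT x y.
(* x -> y : directed path with only consistent edges;  u^oplus *)
Definition creach (x y : V) : bool := reach (fun e => consistent e) x y.
(* y in u^{+,R} : directed path in G - {e_R} *)
Definition reach_minus (R : A) (x y : V) : bool := reach (fun e => e != R) x y.

Definition equivR (R S : A) : bool :=
  [&& inconsistent R, inconsistent S, dreach (src R) (src S) & dreach (src S) (src R)].

Definition uadj (ok : pred V) : rel V :=
  [rel x y | [&& ok x, ok y &
     [exists e, ((src e == x) && (tgt e == y)) || ((tgt e == x) && (src e == y))]]].

Definition upath_in (ok : pred V) (x y : V) : bool :=
  [&& ok x, ok y & connect (uadj ok) x y].

(* S \in coupled^+(R) *)
Definition coupled (R S : A) : bool :=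
  equivR R S ||
  (inconsistent S &&
   upath_in (fun w => ~~ reach_minus R (src R) w) (tgt R) (src S)).

Definition splittable : Prop :=
  forall R S : A, inconsistent R -> inconsistent S ->
    coupled S R -> coupled R S -> equivR R S.

Definition f_closed : Prop :=
  forall R : A, inconsistent R ->
    forall w, creach (tgt R) w -> reach_minus R (src R) w -> creach (src R) w.

Fixpoint walk (x y : V) (p : seq A) : bool :=
  match p with
  | [::] => x == y
  | e :: p' => (src e == x) && walk (tgt e) y p'
  end.

Definition pverts (x : V) (p : seq A) : seq V := x :: map tgt p.

Definition dsimple (x y : V) (p : seq A) : bool :=
  walk x y p && uniq (pverts x p).

Definition same_scc (x y : V) : bool := dreach x y && dreach y x.

End QG.

(* Main.v *)
Require Import Defs.
From mathcomp Require Import all_boot.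
Set Implicit Arguments. Unset Strict Implicit. Unset Printing Implicit Defensive.

Section Proof.
Variable G : qgraph.
Local Notation tgt := (@tgt G).
Local Notation src := (@src G).
Implicit Types (x y w : V G) (e R S : A G) (p : seq (A G)).

Lemma reach_edge (ok : pred (A G)) e : ok e -> reach ok (src e) (tgt e).
Proof. move=> he; apply: connect1; apply/existsP; exists e; by rewrite he !eqxx. Qed.

Lemma walk_reach (ok : pred (A G)) x y p : walk x y p -> all ok p -> reach ok x y.
Proof.
elim: p x => [|e p IH] x /=; first by move=> /eqP-> _; exact: connect0.
case/andP=> /eqP <- hw /andP[he hp].
exact: connect_trans (reach_edge he) (IH _ hw hp).
Qed.

Lemma walk_cat x y p1 e p2 :
  walk x y (p1 ++ e :: p2) -> walk x (src e) p1 /\ walk (tgt e) y p2.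
Proof.
elim: p1 x => [|e1 p1 IH] x /=.
  by case/andP=> /eqP-> ->; rewrite eqxx.
by case/andP=> -> /IH[-> ->].
Qed.

Lemma walk_src x y p e : walk x y p -> e \in p -> src e \in pverts x p.
Proof.
elim: p x => [|e1 p IH] x //= /andP[/eqP h1 hw].
rewrite in_cons => /orP[/eqP->|he]; first by rewrite h1 mem_head.
have := IH _ hw he; rewrite /pverts /= !in_cons => ->; by rewrite !orbT.
Qed.

Lemma walk_tgt x p e : e \in p -> tgt e \in pverts x p.
Proof. by move=> he; rewrite /pverts in_cons map_f ?orbT. Qed.

Lemma walk_last x y p : walk x y p -> y = last x (map tgt p).
Proof.
elim: p x => [|e p IH] x /=; first by move/eqP.
by case/andP=> _ /IH.
Qed.

Lemma one_edge x y p e : dsimple x y p -> e \in p -> src e = x -> tgt e = y -> p = [:: e].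
Proof.
case: p => [|e0 p] //= /andP[/andP[/eqP h0 hw]].
rewrite /pverts /= => /andP[hx hu].
rewrite in_cons => /orP[/eqP ee|he] hs ht.
- subst e.
  case: p hw hu hx => [//|e1 p] hw hu _; exfalso.
  have hl := walk_last (x := tgt e0) (p := e1 :: p) hw.
  move: hu => /andP[hu' _]; move/negP: hu'; apply.
  rewrite ht hl /=; exact: mem_last.
- have := walk_src hw he; rewrite hs => hh.
  by move: hx; rewrite /pverts in hh; rewrite hh.
Qed.

Lemma find_edge (P : pred (V G)) x y p : walk x y p -> ~~ P x -> P y ->
  exists p1 e p2, [/\ p = p1 ++ e :: p2, ~~ P (src e) & P (tgt e)].
Proof.
elim: p x => [|e p IH] x /=; first by move=> /eqP-> /negbTE->.
case/andP=> /eqP hs hw hx hy.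
case hP: (P (tgt e)).
  by exists [::], e, p; rewrite hs hx.
have [p1 [e' [p2 [-> h1 h2]]]] := IH _ hw (negbT hP) hy.
by exists (e :: p1), e', p2.
Qed.

Lemma walk_uconn (ok : pred (V G)) (okE : pred (A G)) x y p :
  walk x y p -> all okE p -> (forall w, reach okE w y -> ok w) ->
  connect (uadj ok) x y && connect (uadj ok) y x.
Proof.
elim: p x => [|e p IH] x /=; first by move=> /eqP-> _ _; rewrite connect0.
case/andP=> /eqP hs hw /andP[he hp] hok.
have /andP[c1 c2] := IH _ hw hp hok.
have okx : ok x by apply: hok; rewrite -hs; apply: connect_trans (reach_edge he) (walk_reach hw hp).
have okt : ok (tgt e) by apply: hok; exact: walk_reach hw hp.
apply/andP; split.
  apply: connect_trans _ c1; apply: connect1; rewrite /uadj /= okx okt /=.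
  by apply/existsP; exists e; rewrite hs !eqxx.
apply: connect_trans c2 _; apply: connect1; rewrite /uadj /= okx okt /=.
by apply/existsP; exists e; rewrite hs !eqxx orbT.
Qed.

Lemma incons_of v e : ~~ creach (src e) v -> creach (tgt e) v -> inconsistent e.
Proof.
move=> hn ht; rewrite /inconsistent; apply/negP => hc; move/negP: hn; apply.
exact: connect_trans (reach_edge (ok := fun e => consistent e) hc) ht.
Qed.

Lemma notin_all R p : R \notin p -> all (fun e => e != R) p.
Proof. by move=> h; apply/allP => e he; apply/eqP => eR; move: h; rewrite -eR he. Qed.

Lemma half u v pA pB p1 R p2 q1 S q2 :
  f_closed G ->
  dsimple u v pA -> dsimple u v pB -> pA != pB ->
  (forall x, x \in pverts u pA -> x \in pverts u pB -> (x == u) || (x == v)) ->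
  pA = p1 ++ R :: p2 -> ~~ creach (src R) v -> creach (tgt R) v ->
  pB = q1 ++ S :: q2 -> inconsistent S ->
  coupled R S /\ src R != u.
Proof.
move=> hf hA hB hne D eA hRn hRt eB hSi.
have hRi := incons_of hRn hRt.
have /andP[wA uA] := hA; have /andP[wB uB] := hB.
have RA : R \in pA by rewrite eA mem_cat mem_head orbT.
have SB : S \in pB by rewrite eB mem_cat mem_head orbT.
have srcv : src R != v.
  by apply/eqP => e; move: hRn; rewrite e /creach /reach connect0.
have RnB : R \notin pB.
  apply/negP => RB.
  have := D _ (walk_src wA RA) (walk_src wB RB).
  rewrite (negbTE srcv) orbF => /eqP su.
  have := D _ (walk_tgt u RA) (walk_tgt u RB).
  have nl := no_loop R.
  case/orP => /eqP tu; first by move: nl; rewrite su tu eqxx.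
  move/negP: hne; apply; apply/eqP.
  by rewrite (one_edge hA RA su tu) (one_edge hB RB su tu).
have [w1 w2] : walk u (src R) p1 /\ walk (tgt R) v p2 by apply: walk_cat; rewrite -eA.
have Rn2 : R \notin p2.
  apply/negP => R2.
  move: uA; rewrite eA /pverts map_cat -cat_cons cat_uniq => /and3P[_ hh _].
  move/hasP: hh; apply; exists (src R).
    by rewrite /= (walk_src w2 R2).
  by rewrite (walk_last w1) mem_last.
have key : forall w, reach_minus R w v -> ~~ reach_minus R (src R) w.
  move=> w hw; apply/negP => hw2; move/negP: hRn; apply.
  exact: hf hRi v hRt (connect_trans hw2 hw).
split; last first.
  apply/eqP => su; have := key v (connect0 _ _); rewrite su.
  by rewrite /reach_minus (walk_reach wB (notin_all RnB)).
apply/orP; right; rewrite hSi /=.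
have [_ w3] : walk u (src S) q1 /\ walk (tgt S) v q2 by apply: walk_cat; rewrite -eB.
have w3' : walk (src S) v (S :: q2) by rewrite /= eqxx.
have a3 : all (fun e => e != R) (S :: q2).
  apply: notin_all; apply/negP => h; move/negP: RnB; apply.
  by rewrite eB mem_cat h orbT.
have /andP[c1 _] := walk_uconn w2 (notin_all Rn2) key.
have /andP[_ c2] := walk_uconn w3' a3 key.
rewrite /upath_in (key _ (walk_reach w2 (notin_all Rn2))) (key _ (walk_reach w3' a3)) /=.
exact: connect_trans c1 c2.
Qed.

End Proof.

Theorem lemma5p12 (G : qgraph) (u v : V G) (pA pB : seq (A G)) :
  f_closed G -> splittable G ->
  dsimple u v pA -> dsimple u v pB -> pA != pB ->
  (forall x y : V G, x \in pverts u pA -> y \in pverts u pB ->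
     x != u -> x != v -> y != u -> y != v -> ~~ same_scc x y) ->
  creach u v.
Proof.
move=> hf hs hA hB hne hD.
apply/idPn => hn.
have D : forall x, x \in pverts u pA -> x \in pverts u pB -> (x == u) || (x == v).
  move=> x hx hy; apply/idPn; rewrite negb_or => /andP[h1 h2].
  by have := hD x x hx hy h1 h2 h1 h2; rewrite /same_scc /dreach /reach connect0.
have D' : forall x, x \in pverts u pB -> x \in pverts u pA -> (x == u) || (x == v).
  by move=> x hx hy; exact: D.
have /andP[wA _] := hA; have /andP[wB _] := hB.
have vv : creach v v by rewrite /creach /reach connect0.
have [p1 [R [p2 [eA hRn hRt]]]] := find_edge (P := fun w => creach w v) wA hn vv.
have [q1 [S [q2 [eB hSn hSt]]]] := find_edge (P := fun w => creach w v) wB hn vv.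
have hRi := incons_of hRn hRt; have hSi := incons_of hSn hSt.
have hne' : pB != pA by rewrite eq_sym.
have [cRS Ru] := half hf hA hB hne D eA hRn hRt eB hSi.
have [cSR Su] := half hf hB hA hne' D' eB hSn hSt eA hRi.
have := hs R S hRi hSi cSR cRS; rewrite /equivR => /and4P[_ _ d1 d2].
have Rv : src R != v by apply/eqP => e; move: hRn; rewrite e vv.
have Sv : src S != v by apply/eqP => e; move: hSn; rewrite e vv.
have RA : src R \in pverts u pA by apply: walk_src wA _; rewrite eA mem_cat mem_head orbT.
have SB : src S \in pverts u pB by apply: walk_src wB _; rewrite eB mem_cat mem_head orbT.
by have := hD _ _ RA SB Ru Rv Su Sv; rewrite /same_scc d1 d2.
Qed.
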